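(* Let $m,n$ be positive integers. Then $$\mathcal{N}_{\frac{n}{m}}(q)=q^d\,\mathcal{D}_{\frac{m}{n}}(q^{-1}),\qquad \mathcal{D}_{\frac{n}{m}}(q)=q^d\,\mathcal{N}_{\frac{m}{n}}(q^{-1}),$$ where $d=\max\big(\deg\mathcal{N}_{\frac{m}{n}},\deg\mathcal{D}_{\frac{m}{n}}\big)$.
   Context: The $q$-deformed rationals: $x\mapsto[x]_q$ is the unique map from $\mathbb{Q}\cup\{\infty\}$ to $\mathbb{Q}(q)\cup\{\infty\}$ (rational functions in the variable $q$) satisfying $[0]_q=0$, $[x+1]_q=q[x]_q+1$ and $[-1/x]_q=-1/(q[x]_q)$ for all $x$. For a positive rational $x$, $\mathcal{N}_x(q)$ and $\mathcal{D}_x(q)$ denote the numerator and denominator of $[x]_q$: the polynomials in $\mathbb{Z}[q]$ with no common divisor in $\mathbb{Z}[q]$ other than $\pm1$ and with positive leading coefficients such that $[x]_q=\mathcal{N}_x(q)/\mathcal{D}_x(q)$. It is known that $[\frac{n}{m}]_q=1/[\frac{m}{n}]_{q^{-1}}$. *)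

(* Defs.v *)
From HB Require Import structures.
From mathcomp Require Import all_boot all_order all_algebra fraction.
Set Implicit Arguments. Unset Strict Implicit. Unset Printing Implicit Defensive.
Import Order.TTheory GRing.Theory Num.Theory.
Local Open Scope ring_scope.

(* Q(q): the field of rational functions, realized as the fraction field of Z[q]. *)
Definition Qq : Type := {fraction {poly int}}.

Definition qvar : Qq := tofrac ('X : {poly int}).

Definition pfrac (p : {poly int}) : Qq := tofrac p.

Definition eval_qinv (p : {poly int}) : Qq :=
  (map_poly (fun c : int => tofrac (c%:P : {poly int})) p).[qvar^-1].

(* Q ∪ {∞} is [option rat] and Q(q) ∪ {∞} is [option Qq], with None = ∞. *)

Definition shiftQ (x : option rat) : option rat :=
  match x with Some r => Some (r + 1) | None => None end.
Definition invQ (x : option rat) : option rat :=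
  match x with
  | Some r => if r == 0 then None else Some (- r^-1)
  | None => Some 0
  end.
Definition shiftQq (y : option Qq) : option Qq :=
  match y with Some a => Some (qvar * a + 1) | None => None end.
Definition invQq (y : option Qq) : option Qq :=
  match y with
  | Some a => if a == 0 then None else Some (- (qvar * a)^-1)
  | None => Some 0
  end.

(* f is the q-deformation map x |-> [x]_q : the (unique) map satisfying
   [0]_q = 0, [x+1]_q = q[x]_q + 1, [-1/x]_q = -1/(q[x]_q). *)
Definition is_qdeformation (f : option rat -> option Qq) : Prop :=
  [/\ f (Some 0) = Some 0,
      forall x, f (shiftQ x) = shiftQq (f x)
    & forall x, f (invQ x) = invQq (f x)].

(* divisibility in Z[q] (genuine, not up to scalars) *)
Definition pdvd (a b : {poly int}) : Prop := exists c : {poly int}, b = c * a.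

Definition is_num_den (v : option Qq) (N D : {poly int}) : Prop :=
  [/\ v = Some (pfrac N / pfrac D),
      forall p : {poly int}, pdvd p N -> pdvd p D -> p = 1 \/ p = -1,
      0 < lead_coef N
    & 0 < lead_coef D].

Definition pdeg (p : {poly int}) : nat := (size p).-1.

(* Main.v *)
Set Warnings "-notation-overridden -ambiguous-paths -notation-incompatible-prefix".
Require Import Defs.
From HB Require Import structures.
From mathcomp Require Import all_boot all_order all_algebra fraction.
From mathcomp Require Import polyrcf realalg ring zify.
Import Order.TTheory GRing.Theory Num.Theory.
Local Open Scope ring_scope.
Implicit Types p : {poly int}.
Definition revp (k : nat) (p : {poly int}) : {poly int} := \poly_(i < k.+1) p`_(k - i).

Lemma coef_revp k p i : (revp k p)`_i = if (i <= k)%N then p`_(k - i) else 0.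
Proof. by rewrite coef_poly ltnS. Qed.

Lemma revpK k p : (size p <= k.+1)%N -> revp k (revp k p) = p.
Proof.
move=> sp; apply/polyP=> i; rewrite !coef_revp.
case: leqP => ik; first by rewrite leq_subr subKn.
by apply/esym/nth_default; apply: leq_trans sp ik.
Qed.

Lemma size_revp k p : (size (revp k p) <= k.+1)%N.
Proof. exact: size_poly. Qed.

Lemma qvar_neq0 : qvar != 0.
Proof. by rewrite /qvar tofrac_eq0 polyX_eq0. Qed.

Definition phiC (c : int) : Qq := tofrac (c%:P).

Lemma eval_qinvE k p : (size p <= k)%N ->
  eval_qinv p = \sum_(i < k) phiC p`_i * qvar^-1 ^+ i.
Proof.
move=> sp; rewrite /eval_qinv (@horner_coef_wide _ k).
  by apply: eq_bigr => i _; rewrite coef_map_id0 // /phiC rmorph0.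
by apply: leq_trans sp; apply: size_poly.
Qed.

Lemma pfracE k p : (size p <= k)%N ->
  pfrac p = \sum_(i < k) phiC p`_i * qvar ^+ i.
Proof.
move=> sp; have E : \poly_(i < k) p`_i = p.
  apply/polyP=> i; rewrite coef_poly; case: ltnP => // ki.
  by apply/esym/nth_default; apply: leq_trans sp ki.
rewrite -{1}E poly_def /pfrac rmorph_sum; apply: eq_bigr => i _.
rewrite -mul_polyC rmorphM rmorphXn.
done.
Qed.

Lemma K p k : (size p <= k.+1)%N -> pfrac (revp k p) = qvar ^+ k * eval_qinv p.
Proof.
move=> sp; rewrite (pfracE _ _ (size_revp k p)) (eval_qinvE _ _ sp) mulr_sumr.
rewrite (reindex_inj rev_ord_inj) /=; apply: eq_bigr => i _.
have ik : (i <= k)%N by rewrite -ltnS.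
rewrite coef_revp subSS leq_subr subKn // mulrCA; congr (_ * _).
by rewrite -[in qvar ^+ k](subnK ik) exprD exprVn mulfK // expf_neq0 // qvar_neq0.
Qed.
Arguments revpK {k p}. Arguments K {p k}.
Lemma eval_qinv_comp p : eval_qinv p = (map_poly (@tofrac _ \o polyC) p).[qvar^-1].
Proof. by []. Qed.

Lemma sD p r : eval_qinv (p + r) = eval_qinv p + eval_qinv r.
Proof. by rewrite !eval_qinv_comp rmorphD hornerD. Qed.

Lemma sM p r : eval_qinv (p * r) = eval_qinv p * eval_qinv r.
Proof. by rewrite !eval_qinv_comp rmorphM hornerM. Qed.

Lemma s1 : eval_qinv 1 = 1.
Proof. by rewrite !eval_qinv_comp rmorph1 hornerC. Qed.

Lemma sX : eval_qinv 'X = qvar^-1.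
Proof. by rewrite !eval_qinv_comp map_polyX hornerX. Qed.

Lemma pfrac_neq0 p : p != 0 -> pfrac p != 0.
Proof. by rewrite /pfrac tofrac_eq0. Qed.

Lemma revp0 k : revp k 0 = 0.
Proof. by apply/polyP=> i; rewrite coef_revp !coef0 if_same. Qed.

Lemma revp_neq0 k p : (size p <= k.+1)%N -> p != 0 -> revp k p != 0.
Proof.
move=> sp; apply: contra_neq => h; by rewrite -(revpK sp) h revp0.
Qed.

Lemma s_neq0 p : p != 0 -> eval_qinv p != 0.
Proof.
move=> p0; have sp : (size p <= (size p).-1.+1)%N by rewrite leqSpred.
have := K sp; apply: contra_eq_neq => ->; rewrite mulr0.
by apply/pfrac_neq0/revp_neq0.
Qed.

Lemma s_revp k p : (size p <= k.+1)%N ->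
  eval_qinv (revp k p) = pfrac p / qvar ^+ k.
Proof.
move=> sp; have := K (size_revp k p); rewrite revpK // => ->.
by rewrite [qvar ^+ k * _]mulrC mulfK // expf_neq0 // qvar_neq0.
Qed.

Section FieldIds.
Variable F : fieldType.
Implicit Types q a b c d n y : F.
Lemma L_a q a b : b != 0 -> q * (a / b) + 1 = (q * a + b) / b.
Proof. by move=> h1; field; rewrite ?h1. Qed.
Lemma L_e y : y != 0 -> y + 1 != 0 -> - (y^-1 + 1)^-1 + 1 = (y + 1)^-1.
Proof. by move=> h1 h2; field; rewrite ?h1 ?h2. Qed.
Lemma L_e2 q d n : n != 0 -> q != 0 -> q * (d / n) + 1 = q * (q^-1 * n + d) / n.
Proof. by move=> h1 h2; field; rewrite ?h1 ?h2. Qed.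
Lemma L_fin q d n : q != 0 -> n != 0 -> q^-1 * n + d != 0 ->
  q * - (q * (q * (d / n) + 1))^-1 + 1 = d / (q^-1 * n + d).
Proof.
move=> h1 h2 h3; have h4 : n + d * q != 0.
  have -> : n + d * q = q * (q^-1 * n + d) by field; rewrite ?h1.
  by rewrite mulf_neq0.
by field; rewrite ?h1 ?h2 ?h3 ?h4.
Qed.
Lemma L_s1 c a b : c != 0 -> b != 0 -> (c * a) / (c * b) = a / b.
Proof. by move=> h1 h2; field; rewrite ?h1 ?h2. Qed.
Lemma L_s2 c a b : c != 0 -> b != 0 -> (a / c) / (b / c) = a / b.
Proof. by move=> h1 h2; field; rewrite ?h1 ?h2. Qed.
End FieldIds.
Arguments L_a {F q a b}. Arguments L_e {F y}. Arguments L_e2 {F q d n}.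
Arguments L_fin {F q d n}. Arguments L_s1 {F c a b}. Arguments L_s2 {F c a b}.
Definition nonneg p := forall i, 0 <= p`_i.

Definition Inv (f : option rat -> option Qq) (x : rat) :=
  exists N D : {poly int}, [/\ N != 0, D != 0, nonneg N, nonneg D &
    f (Some x) = Some (pfrac N / pfrac D) /\
    f (Some x^-1) = Some (eval_qinv D / eval_qinv N)].

Lemma Inv1 f : is_qdeformation f -> Inv f 1.
Proof.
case=> h0 hs hi; have f1 : f (Some 1) = Some 1.
  by have := hs (Some 0); rewrite /= add0r h0 /= mulr0 add0r.
have n1 : nonneg 1 by move=> i; rewrite coef1 ler0n.
exists 1, 1; split; rewrite ?oner_neq0 //; split.
  by rewrite f1 /pfrac rmorph1 divr1.
by rewrite invr1 f1 s1 divr1.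
Qed.

Lemma Inv_step f y : is_qdeformation f -> 0 < y -> Inv f y -> Inv f (y + 1).
Proof.
case=> h0 hs hi y0 [N [D [N0 D0 nN nD [fy fyi]]]].
have nN' : nonneg ('X * N + D).
  by move=> i; rewrite coefD coefXM; case: eqP => _; rewrite addr_ge0.
have N'0 : 'X * N + D != 0.
  apply: contra_neq D0 => h; apply/polyP => i; rewrite coef0.
  have := congr1 (fun p => p`_i) h; rewrite coef0 coefD.
  move/eqP; rewrite paddr_eq0 ?nD //; first by case/andP=> _ /eqP.
  by rewrite coefXM; case: eqP.
have sN0 := s_neq0 _ N0; have sD0 := s_neq0 _ D0; have sNp0 := s_neq0 _ N'0.
have hN' : eval_qinv ('X * N + D) = qvar^-1 * eval_qinv N + eval_qinv D.
  by rewrite sD sM sX.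
have q0 := qvar_neq0.
have pD0 := pfrac_neq0 _ D0.
exists ('X * N + D), D; do ![split] => //.
  have := hs (Some y); rewrite /= fy /= => ->; congr Some.
  rewrite /pfrac rmorphD rmorphM /= -/qvar -/(pfrac N) -/(pfrac D).
  exact: L_a pD0.
have y0' : y != 0 by rewrite lt0r_neq0.
have yi0 : y^-1 + 1 != 0 by rewrite lt0r_neq0 // addr_gt0 // invr_gt0.
have y10 : y + 1 != 0 by rewrite lt0r_neq0 // addr_gt0.
have e : Some (y + 1)^-1 = shiftQ (invQ (shiftQ (Some y^-1))).
  by rewrite /shiftQ /invQ (negbTE yi0) (L_e y0' y10).
have sNp0' : qvar^-1 * eval_qinv N + eval_qinv D != 0 :=
  eq_ind _ (fun z => z != 0) sNp0 _ hN'.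
have nz : qvar * (eval_qinv D / eval_qinv N) + 1 != 0.
  rewrite (L_e2 sN0 q0); exact: mulf_neq0 (mulf_neq0 q0 sNp0') (invr_neq0 sN0).
rewrite e hs hi hs fyi /shiftQq /invQq (negbTE nz); congr Some.
exact: (etrans (L_fin q0 sN0 sNp0') (f_equal (fun z => eval_qinv D / z) (esym hN'))).
Qed.
Lemma Inv_swap f x : Inv f x -> Inv f x^-1.
Proof.
move=> [N [D [N0 D0 nN nD [fx fxi]]]].
set k := maxn (size N) (size D).
have sN : (size N <= k.+1)%N by apply: leq_trans (leq_maxl _ _) (leqnSn _).
have sD : (size D <= k.+1)%N by apply: leq_trans (leq_maxr _ _) (leqnSn _).
have nrev p : nonneg p -> nonneg (revp k p).
  by move=> np i; rewrite coef_revp; case: ifP.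
have qk : qvar ^+ k != 0 by apply: expf_neq0; apply: qvar_neq0.
exists (revp k D), (revp k N); split; try exact: revp_neq0; try exact: nrev.
split.
  rewrite fxi (K sD) (K sN); congr Some.
  exact: esym (L_s1 qk (s_neq0 _ N0)).
rewrite invrK fx (s_revp _ _ sN) (s_revp _ _ sD); congr Some.
exact: esym (L_s2 qk (pfrac_neq0 _ D0)).
Qed.

Arguments Inv_step {f y}. Arguments Inv_swap {f x}.
Lemma rat_step (n j : nat) : (0 < n)%N -> j%:Q / n%:Q + 1 = (n + j)%N%:Q / n%:Q.
Proof.
move=> n0; have nz : n%:Q != 0 by rewrite intr_eq0 eqz_nat -lt0n.
rewrite PoszD intrD. by field; rewrite nz.
Qed.

Lemma rat_pos (n j : nat) : (0 < n)%N -> (0 < j)%N -> 0 < j%:Q / n%:Q.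
Proof. by move=> n0 j0; rewrite divr_gt0 // ltr0z ltz_nat. Qed.

Arguments rat_pos {n j}.
Lemma Inv_all f : is_qdeformation f ->
  forall n m : nat, (0 < n)%N -> (0 < m)%N -> Inv f (n%:Q / m%:Q).
Proof.
move=> hf n m; have [k] := ubnP (n + m); elim: k n m => // k IH n m nmk n0 m0.
case: (ltngtP n m) => [nm|mn|<-].
- have [j Em j0] : exists2 j, m = (n + j)%N & (0 < j)%N.
    by exists (m - n)%N; [rewrite subnKC // ltnW | rewrite subn_gt0].
  have Ij : Inv f (j%:Q / n%:Q) by apply: IH => //; lia.
  have := Inv_step hf (rat_pos n0 j0) Ij; rewrite rat_step // -Em.
  by move/Inv_swap; rewrite invf_div.
- have [j Em j0] : exists2 j, n = (m + j)%N & (0 < j)%N.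
    by exists (n - m)%N; [rewrite subnKC // ltnW | rewrite subn_gt0].
  have Ij : Inv f (j%:Q / m%:Q) by apply: IH => //; lia.
  by have := Inv_step hf (rat_pos m0 j0) Ij; rewrite rat_step // -Em.
- rewrite divff; first exact: Inv1.
  by rewrite intr_eq0 eqz_nat -lt0n.
Qed.
Definition reduced (N D : {poly int}) := forall p, pdvd p N -> pdvd p D -> p = 1 \/ p = -1.

Lemma red_coprime (N D : {poly int}) : reduced N D -> coprimep N D.
Proof.
move=> hr; rewrite coprimep_def.
have [r1 e1] := dvdpP_int (dvdp_gcdl N D).
have [r2 e2] := dvdpP_int (dvdp_gcdr N D).
have := hr (zprimitive (gcdp N D)) (ex_intro _ r1 (etrans e1 (mulrC _ _)))
  (ex_intro _ r2 (etrans e2 (mulrC _ _))).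
by rewrite -size_zprimitive => -[->|->]; rewrite ?size_polyN size_poly1.
Qed.

Lemma pfrac_inj : injective pfrac.
Proof. by move=> x y /eqP; rewrite /pfrac tofrac_eq => /eqP. Qed.

Lemma rev_factor (d : nat) (c p : {poly int}) : (size (c * p)%R <= d.+1)%N -> c != 0 -> p != 0 ->
  revp d (c * p) = revp (d - (size p).-1)%N c * revp (size p).-1 p.
Proof.
move=> scp c0 p0; move: scp; rewrite size_mul // => scp.
have sc0 : (0 < size c)%N by rewrite size_poly_gt0.
have sp0 : (0 < size p)%N by rewrite size_poly_gt0.
have sc : (size c <= (d - (size p).-1)%N.+1)%N.
  by move: (size c) (size p) scp sc0 sp0 => a b; rewrite -!subn1; lia.
have sp : (size p <= (size p).-1.+1)%N by rewrite leqSpred.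
have ed : ((size p).-1 <= d)%N.
  by move: (size c) (size p) scp sc0 sp0 => a b; rewrite -!subn1; lia.
apply: pfrac_inj; rewrite {2}/pfrac rmorphM /= -!/(pfrac _).
rewrite (K sc) (K sp) K; last by rewrite size_mul //.
by rewrite sM mulrACA -exprD subnK.
Qed.
Implicit Types N D q : {poly int}.
Lemma revp0E q : revp 0 q = (q`_0)%:P.
Proof. by apply/polyP=> i; rewrite coef_revp coefC leqn0; case: eqP. Qed.

Lemma red_rev d N D : (size N <= d.+1)%N -> (size D <= d.+1)%N ->
  (N`_d != 0) || (D`_d != 0) -> reduced N D -> reduced (revp d N) (revp d D).
Proof.
move=> sN sD hd hr p [c1 e1] [c2 e2].
have c0d (M : {poly int}) : (size M <= d.+1)%N -> revp d M = 0 -> M`_d = 0.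
  by move=> sM h; rewrite -(revpK sM) h revp0 coef0.
have p0 : p != 0.
  apply: contraTneq hd => p0; move: e1 e2; rewrite p0 !mulr0 => e1 e2.
  by rewrite (c0d _ sN e1) (c0d _ sD e2) eqxx.
set e := (size p).-1.
have dv (M : {poly int}) c : (size M <= d.+1)%N -> revp d M = c * p ->
    pdvd (revp e p) M.
  move=> sM eM; have [c0|c0] := eqVneq c 0.
    by exists 0; rewrite mul0r -(revpK sM) eM c0 mul0r revp0.
  exists (revp (d - e) c); rewrite -(revpK sM) eM rev_factor //.
  by rewrite -eM; exact: size_revp.
have hrp := hr _ (dv N c1 sN e1) (dv D c2 sD e2).
have pE : p = revp e (revp e p) by rewrite revpK // leqSpred.
have [e0|epos] := posnP e.
  have -> : p = ((revp e p)`_0)%:P by rewrite {1}pE e0 revp0E.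
  by case: hrp => ->; [left; rewrite coef1 | right; rewrite coefN coef1 polyCN].
have p00 : p`_0 = 0.
  rewrite pE coef_revp leq0n subn0.
  by case: hrp => ->; rewrite ?coefN coef1 gtn_eqF // ?oppr0.
have cd (M : {poly int}) c : revp d M = c * p -> M`_d = 0.
  move=> eM; have := congr1 (fun r : {poly int} => r`_0) eM.
  by rewrite coef_revp leq0n subn0 coef0M p00 mulr0.
by move: hd; rewrite (cd _ _ e1) (cd _ _ e2) eqxx.
Qed.
Lemma red_contents N D : reduced N D -> coprimez (zcontents N) (zcontents D).
Proof.
move=> hr; set g := gcdz (zcontents N) (zcontents D).
have dvg (M : {poly int}) : (g %| zcontents M)%Z -> pdvd g%:P M.
  move=> gM; exists ((zcontents M %/ g)%Z *: zprimitive M).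
  by rewrite mulrC mul_polyC scalerA mulrC divzK // -zpolyEprim.
have := hr _ (dvg N (dvdz_gcdl _ _)) (dvg D (dvdz_gcdr _ _)).
rewrite /coprimez -/g; case=> [/(congr1 (fun p : {poly int} => p`_0))|].
  by rewrite coefC coef1 /= => ->.
rewrite -polyCN => /polyC_inj; by rewrite /g /gcdz.
Qed.
Arguments red_coprime {N D}. Arguments red_contents {N D}.
Lemma pos_contents N : 0 < lead_coef N -> 0 < zcontents N.
Proof.
move=> h; have := sgz_contents N; rewrite (gtr0_sgz h).
by case: ltrgt0P => // [hn|->]; rewrite ?(ltr0_sgz hn) ?sgz0.
Qed.

Lemma red_unique (N1 D1 N2 D2 : {poly int}) : reduced N1 D1 -> reduced N2 D2 ->
  0 < lead_coef N1 -> 0 < lead_coef D1 -> N2 != 0 -> D2 != 0 ->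
  N1 * D2 = N2 * D1 -> (N2 = N1 /\ D2 = D1) \/ (N2 = - N1 /\ D2 = - D1).
Proof.
move=> h1 h2 lN1 lD1 N20 D20 E.
have N10 : N1 != 0 by rewrite -lead_coef_eq0 gt_eqF.
have D10 : D1 != 0 by rewrite -lead_coef_eq0 gt_eqF.
have cop1 := red_coprime h1; have cop2 := red_coprime h2.
have dN12 : N1 %| N2 by rewrite -(Gauss_dvdpl _ cop1) -E dvdp_mulIl.
have dN21 : N2 %| N1 by rewrite -(Gauss_dvdpl _ cop2) E dvdp_mulIl.
have dD12 : D1 %| D2.
  by rewrite -(Gauss_dvdpr _ (etrans (coprimep_sym _ _) cop1)) E dvdp_mulIr.
have dD21 : D2 %| D1.
  by rewrite -(Gauss_dvdpr _ (etrans (coprimep_sym _ _) cop2)) -E dvdp_mulIr.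
have pN : zprimitive N2 = zprimitive N1.
  have /eqp_eq e : N1 %= N2 by rewrite /eqp dN12 dN21.
  have := congr1 zprimitive e; rewrite !zprimitiveZ ?lead_coef_eq0 //.
have pD : zprimitive D2 = zprimitive D1.
  have /eqp_eq e : D1 %= D2 by rewrite /eqp dD12 dD21.
  have := congr1 zprimitive e; rewrite !zprimitiveZ ?lead_coef_eq0 //.
set P := zprimitive N1 in pN; set Q := zprimitive D1 in pD.
have eN1 : N1 = zcontents N1 *: P by exact: zpolyEprim.
have eD1 : D1 = zcontents D1 *: Q by exact: zpolyEprim.
have eN2 : N2 = zcontents N2 *: P by rewrite -pN; exact: zpolyEprim.
have eD2 : D2 = zcontents D2 *: Q by rewrite -pD; exact: zpolyEprim.
set c1 := zcontents N1 in eN1; set e1 := zcontents D1 in eD1.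
set c2 := zcontents N2 in eN2; set e2 := zcontents D2 in eD2.
have PQ0 : P * Q != 0.
  by rewrite mulf_neq0 // /P /Q zprimitive_eq0.
have Ec : c1 * e2 = c2 * e1.
  move: E; rewrite eN1 eD1 eN2 eD2 -!scalerAl -!scalerAr !scalerA => /eqP.
  rewrite -subr_eq0 -scalerBl scale_poly_eq0 (negbTE PQ0) orbF subr_eq0.
  by move=> /eqP.
have co1 := red_contents h1; have co2 := red_contents h2.
have c1p : 0 < c1 by exact: pos_contents.
have d12 : (c1 %| c2)%Z.
  by rewrite -(Gauss_dvdzl _ co1) -Ec dvdz_mulr ?dvdzz.
have d21 : (c2 %| c1)%Z.
  by rewrite -(Gauss_dvdzl _ co2) Ec dvdz_mulr ?dvdzz.
have ac : `|c1|%N = `|c2|%N by apply/eqP; rewrite eqn_dvd -!dvdzE d12 d21.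
have c10 : c1 != 0 by rewrite gt_eqF.
have c20 : c2 != 0 by rewrite zcontents_eq0.
have [c2p|c2n|c2z] := ltrgt0P c2; last by move: c20; rewrite c2z eqxx.
  have ec : c2 = c1.
    by rewrite -[c2]gtz0_abs // -[c1]gtz0_abs // ac.
  left; move: Ec; rewrite ec => /(mulfI c10) ee.
  by rewrite eN2 eN1 eD2 eD1 ec ee.
have ec : c2 = - c1.
  have hc : - c2 = c1 by rewrite -ltz0_abs // -[c1]gtz0_abs // ac.
  by rewrite -hc opprK.
right; move: Ec; rewrite ec mulNr -mulrN => /(mulfI c10) ee.
by rewrite eN2 eN1 eD2 eD1 ec ee !scaleNr.
Qed.
Section RCF.
Variable R : rcfType.
Local Notation mp := (map_poly (intr : int -> R)).

Lemma mp_pos p (x : R) : nonneg p -> p != 0 -> 0 < x -> 0 < (mp p).[x].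
Proof.
move=> np p0 x0; rewrite horner_coef size_map_inj_poly; last by rewrite mulr0z.
  2: exact: intr_inj.
have i0 : ((size p).-1 < size p)%N by rewrite prednK // size_poly_gt0.
rewrite (bigD1 (Ordinal i0)) //= coef_map /=.
apply: ltr_wpDr.
  apply: sumr_ge0 => i _; rewrite coef_map /= mulr_ge0 //; first by rewrite ler0z.
  by rewrite exprn_ge0 // ltW.
rewrite mulr_gt0 ?exprn_gt0 // ltr0z lt_def -/(lead_coef p) lead_coef_eq0 p0.
exact: np.
Qed.

Lemma mp_noroot P Q N' D' (x : R) : reduced P Q -> nonneg N' -> N' != 0 ->
  P * D' = N' * Q -> 0 < x -> (mp P).[x] != 0.
Proof.
move=> hr nN N0 E x0; have cop := red_coprime hr.
have [[u v] /= huv] := Bezoutp P Q.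
have : size (u * P + v * Q) == 1%N.
  by rewrite (eqp_size huv) -coprimep_def.
case/size_poly1P => c c0 hc.
apply/negP => /eqP Px.
have hQ : (mp Q).[x] = 0.
  have := congr1 (fun r => (mp r).[x]) E; rewrite /= !rmorphM !hornerM Px mul0r.
  move/eqP; rewrite eq_sym mulf_eq0 => /orP[|/eqP //].
  by rewrite gt_eqF // mp_pos.
have := congr1 (fun r => (mp r).[x]) hc.
rewrite /= rmorphD !rmorphM hornerD !hornerM Px hQ !mulr0 addr0 map_polyC hornerC.
by move/esym/eqP; rewrite intr_eq0 (negbTE c0).
Qed.

Lemma mp_pos1 P Q N' D' : reduced P Q -> 0 < lead_coef P -> nonneg N' -> N' != 0 ->
  P * D' = N' * Q -> 0 < P.[1].
Proof.
move=> hr lP nN N0 E.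
have nr : {in `[(1 : R), +oo[, forall y : R, ~~ root (mp P) y}.
  move=> y; rewrite in_itv /= andbT => y1; rewrite /root.
  exact: (@mp_noroot _ _ _ _ y hr nN N0 E (lt_le_trans ltr01 y1)).
have h1 := sgp_pinftyP nr; have := h1 1; rewrite in_itv /= lexx => /(_ isT).
rewrite /sgp_pinfty lead_coef_map_inj; last 2 first.
- exact: intr_inj.
- by rewrite mulr0z.
have e1 : (mp P).[1] = (P.[1])%:~R.
  by rewrite -[in LHS](rmorph1 (intr : int -> R)) horner_map.
rewrite e1 (@gtr0_sg R ((lead_coef P)%:~R)) ?ltr0z // => h.
by rewrite -(@ltr0z R) -sgr_gt0 h ltr01.
Qed.
End RCF.
Section FieldIds2.
Variable F : fieldType.
Lemma L_cross (a b c e : F) : b != 0 -> e != 0 -> a / b = c / e -> a * e = c * b.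
Proof. by move=> b0 e0 h; rewrite -[a](mulfVK b0) h; field; rewrite ?e0. Qed.
Lemma L_swap (x y z w : F) : x != 0 -> z != 0 -> x * y = z * w -> y / z = w / x.
Proof.
by move=> h1 h2 h; rewrite -(L_s1 (a:=y) h1 h2) h; field; rewrite ?h1 ?h2.
Qed.
End FieldIds2.
Arguments L_cross {F a b c e}. Arguments L_swap {F x y z w}.
Arguments Inv_all {f} _ {n m}.
Arguments pfrac_neq0 {p}. Arguments s_neq0 {p}. Arguments revp_neq0 {k p}.
Arguments red_rev {d N D}. Arguments red_unique {N1 D1 N2 D2}.
Arguments mp_pos1 {R P Q N' D'}.
Lemma horner1_revp d p : (size p <= d.+1)%N -> (revp d p).[1] = p.[1].
Proof.
move=> sp; rewrite (horner_coef_wide _ (size_revp d p)) (horner_coef_wide _ sp).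
rewrite (reindex_inj rev_ord_inj) /=; apply: eq_bigr => i _.
rewrite !expr1n !mulr1 coef_revp subSS leq_subr subKn //.
by rewrite -ltnS.
Qed.

Arguments horner1_revp {d p}.
Lemma reduced_sym N D : reduced N D -> reduced D N.
Proof. by move=> h p a b; apply: h. Qed.

Arguments reduced_sym {N D}.
Lemma size_le_pdeg p d : (pdeg p <= d)%N -> (size p <= d.+1)%N.
Proof. by rewrite /pdeg => h; apply: leq_trans (leqSpred _) _; rewrite ltnS. Qed.

Theorem corollary1 (f : option rat -> option Qq) (hf : is_qdeformation f)
  (m n : nat) (hm : (0 < m)%N) (hn : (0 < n)%N)
  (Nnm Dnm Nmn Dmn : {poly int})
  (hnm : is_num_den (f (Some (n%:Q / m%:Q))) Nnm Dnm)
  (hmn : is_num_den (f (Some (m%:Q / n%:Q))) Nmn Dmn) :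
  let d := maxn (pdeg Nmn) (pdeg Dmn) in
  pfrac Nnm = qvar ^+ d * eval_qinv Dmn /\
  pfrac Dnm = qvar ^+ d * eval_qinv Nmn.
Proof.
move=> d; case: hnm => enm rnm lNnm lDnm; case: hmn => emn rmn lNmn lDmn.
have Nnm0 : Nnm != 0 by rewrite -lead_coef_eq0 gt_eqF.
have Dnm0 : Dnm != 0 by rewrite -lead_coef_eq0 gt_eqF.
have Nmn0 : Nmn != 0 by rewrite -lead_coef_eq0 gt_eqF.
have Dmn0 : Dmn != 0 by rewrite -lead_coef_eq0 gt_eqF.
have [N [D [N0 D0 nN nD [fmn fnm]]]] := Inv_all hf hm hn.
rewrite invf_div in fnm.
have [N2 [D2 [N20 D20 nN2 nD2 [fnm2 _]]]] := Inv_all hf hn hm.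
have E1 : Nmn * D = N * Dmn.
  apply: pfrac_inj; rewrite /pfrac !rmorphM /= -!/(pfrac _).
  apply: L_cross; try exact: pfrac_neq0.
  by move: emn; rewrite fmn => -[].
have E2 : Nnm * D2 = N2 * Dnm.
  apply: pfrac_inj; rewrite /pfrac !rmorphM /= -!/(pfrac _).
  apply: L_cross; try exact: pfrac_neq0.
  by move: enm; rewrite fnm2 => -[].
have pos1 : 0 < Nnm.[1] := mp_pos1 (R := realalg) rnm lNnm nN2 N20 E2.
have E1' : Dmn * N = D * Nmn by rewrite mulrC -E1 mulrC.
have pos2 : 0 < Dmn.[1] := mp_pos1 (R := realalg) (reduced_sym rmn) lDmn nD D0 E1'.
have sNmn : (size Nmn <= d.+1)%N by apply: size_le_pdeg; exact: leq_maxl.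
have sDmn : (size Dmn <= d.+1)%N by apply: size_le_pdeg; exact: leq_maxr.
set A := revp d Dmn; set B := revp d Nmn.
have qd : qvar ^+ d != 0 by apply: expf_neq0; exact: qvar_neq0.
have E3 : Nnm * B = A * Dnm.
  apply: pfrac_inj; rewrite /pfrac !rmorphM /= -!/(pfrac _).
  apply: L_cross; try exact: pfrac_neq0.
    by apply: pfrac_neq0; apply: revp_neq0.
  move: enm; rewrite fnm => -[<-].
  rewrite /A /B (K sDmn) (K sNmn) (L_s1 qd (s_neq0 Nmn0)).
  apply: L_swap; try exact: s_neq0.
  by rewrite -!sM E1.
have hd : (Dmn`_d != 0) || (Nmn`_d != 0).
  rewrite /d /pdeg; case: leqP => h.
    by rewrite -/(lead_coef Dmn) lead_coef_eq0 Dmn0.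
  by rewrite orbC -/(lead_coef Nmn) lead_coef_eq0 Nmn0.
have rAB : reduced A B := red_rev sDmn sNmn hd (reduced_sym rmn).
have A0 : A != 0 by apply: revp_neq0.
have B0 : B != 0 by apply: revp_neq0.
case: (red_unique rnm rAB lNnm lDnm A0 B0 E3) => [[eA eB]|[eA eB]].
  by rewrite -eA -eB /A /B !K.
have := horner1_revp sDmn; rewrite -/A eA hornerN => h.
by move: pos2; rewrite -h oppr_gt0 ltNge (ltW pos1).
Qed.
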